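(* Let $A$ be a bivariate copula and $K_A$ a version of its Markov kernel such that the function $(x,y)\mapsto K_A(x,[0,y])$ on $[0,1]^2$ has a discontinuity. Then the sequence $(\Delta_N)_{N\in\mathbb{N}}$ given by $$\Delta_N:=\sup_{(x,y)\in[0,1]^2}\left|K_{\mathcal{B}_N(A)}(x,[0,y])-K_A(x,[0,y])\right|$$ does not converge to $0$ as $N\to\infty$.
   Context: A (bivariate) copula is a distribution function on $[0,1]^2$ with uniform marginals; each copula $B$ corresponds to a doubly stochastic measure $\mu_B$ with $B(x,y)=\mu_B([0,x]\times[0,y])$. A Markov kernel of $B$ is a map $K_B:[0,1]\times\mathcal{B}([0,1])\to[0,1]$, measurable in the first argument, a probability measure in the second, with $\int_{E_1}K_B(x,E_2)\,d\lambda(x)=\mu_B(E_1\times E_2)$ for all Borel $E_1,E_2$ ($\lambda$ = Lebesgue measure). Bernstein approximation: $p_{N,k}(u)=\binom Nk u^k(1-u)^{N-k}$ for $k\in\{0,\dots,N\}$ and $p_{N,k}\equiv0$ otherwise; $\mathcal{B}_N(A)(x,y)=\sum_{i,j=1}^N A(\tfrac iN,\tfrac jN)p_{N,i}(x)p_{N,j}(y)$, with Markov kernel version $K_{\mathcal{B}_N(A)}(x,[0,y])=N\sum_{i,j=1}^N A(\tfrac iN,\tfrac jN)\big(p_{N-1,i-1}(x)-p_{N-1,i}(x)\big)p_{N,j}(y)$. *)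

(* Defs.v *)
From HB Require Import structures.
From mathcomp Require Import all_boot all_order all_algebra.
From mathcomp Require Import all_classical all_reals all_analysis measurable_realfun.
Set Implicit Arguments. Unset Strict Implicit. Unset Printing Implicit Defensive.
Import Order.TTheory GRing.Theory Num.Theory.
Import numFieldNormedType.Exports.
Local Open Scope classical_set_scope.
Local Open Scope ring_scope.

Section Defs.
Variable R : realType.

Definition I01 : set R := `[0, 1]%classic.

Definition is_copula (A : R -> R -> R) : Prop :=
  [/\ (forall x, I01 x -> A x 0 = 0 /\ A 0 x = 0),
      (forall x, I01 x -> A x 1 = x /\ A 1 x = x) &
      (forall x1 x2 y1 y2, I01 x1 -> I01 x2 -> I01 y1 -> I01 y2 ->
         x1 <= x2 -> y1 <= y2 ->
         0 <= A x2 y2 - A x1 y2 - A x2 y1 + A x1 y1)].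

(** [K] is (a version of) the Markov kernel of the copula [A]:
    K(x,.) is a probability measure on the Borel sets of [0,1] for every
    x in [0,1], x |-> K(x,E) is measurable, and
    int_{E1} K(x,E2) dlambda(x) = mu_A(E1 x E2) for all Borel E1,E2 of [0,1],
    where mu_A is the doubly stochastic measure of A, i.e. the measure on
    [0,1]^2 with A(x,y) = mu_A([0,x] x [0,y]). *)
Definition markov_kernel_of (A : R -> R -> R)
    (K : R -> {measure set R -> \bar R}) : Prop :=
  [/\ (forall x, I01 x -> K x I01 = 1%E),
      (forall E, measurable E -> measurable_fun I01 (K ^~ E)) &
      exists mu : {measure set (R * R)%type -> \bar R},
        [/\ mu (~` (I01 `*` I01)) = 0%E,
            (forall x y, I01 x -> I01 y ->
               mu (`[0, x]%classic `*` `[0, y]%classic) = (A x y)%:E) &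
            (forall E1 E2, measurable E1 -> measurable E2 ->
               E1 `<=` I01 -> E2 `<=` I01 ->
               (\int[lebesgue_measure]_(x in E1) K x E2)%E = mu (E1 `*` E2))]].

Definition bern (N k : nat) (u : R) : R :=
  if (k <= N)%N then ('C(N, k))%:R * u ^+ k * (1 - u) ^+ (N - k) else 0.

(** K_{B_N(A)}(x,[0,y]) as given in the paper. *)
Definition bernstein_kernel (A : R -> R -> R) (N : nat) (x y : R) : R :=
  N%:R * \sum_(1 <= i < N.+1) \sum_(1 <= j < N.+1)
     A (i%:R / N%:R) (j%:R / N%:R)
       * (bern N.-1 i.-1 x - bern N.-1 i x) * bern N j y.

Definition kernel_error (A : R -> R -> R) (K : R -> {measure set R -> \bar R})
    (N : nat) (x y : R) : \bar R :=
  let I0y : set R := `[0, y]%classic in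
  `| (bernstein_kernel A N x y)%:E - K x I0y |%E.

Definition Delta (A : R -> R -> R) (K : R -> {measure set R -> \bar R})
    (N : nat) : \bar R :=
  ereal_sup [set e | exists x y, [/\ I01 x, I01 y & e = kernel_error A K N x y]].

Definition kernel_cdf (K : R -> {measure set R -> \bar R}) (p : R * R) : R :=
  let I0y : set R := `[0, p.2]%classic in fine (K p.1 I0y).

End Defs.

(* Main.v *)
Require Import Defs.
From HB Require Import structures.
From mathcomp Require Import all_boot all_order all_algebra.
From mathcomp Require Import all_classical all_reals all_analysis measurable_realfun.
From mathcomp Require Import ring lra.
Import Order.TTheory GRing.Theory Num.Theory.
Import numFieldNormedType.Exports.
Local Open Scope classical_set_scope.
Local Open Scope ring_scope.

Section Helpers.
Variable R : realType.

Lemma cont_sum (T : topologicalType) (I : Type) (r : seq I) (P : pred I)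
  (F : I -> T -> R) (x : T) :
  (forall i, {for x, continuous (F i)}) ->
  {for x, continuous (fun p => \sum_(i <- r | P i) F i p)}.
Proof.
move=> HF; elim: r => [|a r IH].
  have -> : (fun p => \sum_(i <- [::] | P i) F i p) = (fun=> 0).
    by apply/funext => p; rewrite big_nil.
  exact: cvg_cst.
have -> : (fun p => \sum_(i <- a :: r | P i) F i p) =
   (fun p => (if P a then F a p else 0) + \sum_(i <- r | P i) F i p).
  by apply/funext => p; rewrite big_cons; case: (P a); rewrite ?add0r.
apply: cvgD => //.
by case: (P a); [exact: HF | exact: cvg_cst].
Qed.

Lemma bern_cont N k : continuous (@bern R N k).
Proof.
move=> u; rewrite /bern; case: (k <= N)%N; last exact: cvg_cst.
apply: cvgM; first apply: cvgM.
- exact: cvg_cst.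
- exact: exprn_continuous.
- have h1 : {for u, continuous (fun u : R => 1 - u)}.
    by apply: cvgB; [exact: cvg_cst | exact: cvg_id].
  exact: (continuous_comp h1 (@exprn_continuous R _ _)).
Qed.

Lemma BK_cont (A : R -> R -> R) N :
  continuous (fun p : R * R => bernstein_kernel A N p.1 p.2).
Proof.
move=> p; rewrite /bernstein_kernel.
apply: cvgM; first exact: cvg_cst.
apply: cont_sum => i; apply: cont_sum => j.
apply: cvgM; first apply: cvgM.
- exact: cvg_cst.
- apply: (@continuous_comp _ _ _ fst (fun u => bern N.-1 i.-1 u - bern N.-1 i u)).
    exact: cvg_fst.
  apply: cvgB; exact: bern_cont.
- apply: (@continuous_comp _ _ _ snd (bern N j)).
    exact: cvg_snd.
  exact: bern_cont.
Qed.

End Helpers.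

Theorem proposition4p4 (R : realType) (A : R -> R -> R)
    (K : R -> {measure set R -> \bar R}) :
  is_copula A -> markov_kernel_of A K ->
  ~ {within (@I01 R `*` @I01 R), continuous (kernel_cdf K)} ->
  ~ (Delta A K @ \oo --> (0 : \bar R)%E).
Proof.
move=> _ [Kprob _ _] ncont Dcv; apply: ncont.
set F := kernel_cdf K.
have Ffin : forall x y, I01 x -> I01 y -> K x `[0, y]%classic = (F (x, y))%:E.
  move=> x y Ix Iy; rewrite /F /kernel_cdf /= fineK //.
  rewrite ge0_fin_numE ?measure_ge0 //.
  have hle : (K x `[0%R, y]%classic <= K x (@I01 R))%E.
    apply: le_measure; [rewrite inE; exact: measurable_itv
                       | rewrite inE; exact: measurable_itv | ].
    move=> z /=; rewrite /I01 /= !in_itv /= => /andP[z0 zy]; apply/andP; split => //.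
    by apply: le_trans zy _; move: Iy; rewrite /I01 /= in_itv /= => /andP[].
  by apply: (le_lt_trans hle); rewrite Kprob // ltry.
have bound : forall N x y, I01 x -> I01 y ->
    (`|bernstein_kernel A N x y - F (x, y)|%:E <= Delta A K N)%E.
  move=> N x y Ix Iy; apply: ereal_sup_ubound; exists x, y; split => //.
  by rewrite /kernel_error Ffin.
apply/subspace_continuousP => p Ap.
apply/cvgrPdist_lt => e e0.
have e30 : 0 < e / 3 by rewrite divr_gt0.
have : \forall N \near \oo, (Delta A K N < (e / 3)%:E)%E.
  apply: (Dcv [set z | (z < (e / 3)%:E)%E]).
  change (\forall z \near (0%R)%:E, (z < (e / 3)%:E)%E).
  apply/nbhs_EFin; near=> t; rewrite lte_fin.
  by near: t; exact: lt_nbhsl.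
move=> [M _ HM]; have {HM} HM := HM M (leqnn M).
have Bc := @BK_cont R A M p.
move/cvgrPdist_lt : Bc => /(_ _ e30) Bc.
move: Bc; apply: filterS => q Hq Aq.
case: Ap => Ap1 Ap2; case: Aq => Aq1 Aq2.
have h1 := le_lt_trans (bound M _ _ Ap1 Ap2) HM.
have h2 := le_lt_trans (bound M _ _ Aq1 Aq2) HM.
rewrite lte_fin in h1; rewrite lte_fin in h2.
have {h1} h1 : `|bernstein_kernel A M p.1 p.2 - F p| < e / 3 by exact: h1.
have {h2} h2 : `|bernstein_kernel A M q.1 q.2 - F q| < e / 3 by exact: h2.
move: h1 h2 Hq; rewrite /=.
move=> /ltr_normlP[h1 h1'] /ltr_normlP[h2 h2'] /ltr_normlP[h3 h3'].
change (`|F p - F q| < e); apply/ltr_normlP; split; lra.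
Unshelve. all: end_near. Qed.
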